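(* Let $K$ be finite with $|K|\ge2$ and let $f^q:\mathcal{P}^n\to 2^K$ be a voting by quota with quotas $q=\{q_k\}_{k\in K}$, $1\le q_k\le n$. Then $f^q$ is NOM if and only if $2\le q_k\le n-1$ for each $k\in K$.
   Context: $N=\{1,\dots,n\}$, $n\ge2$; alternatives are subsets of $K$; $\mathcal{P}$ all strict linear orders on $2^K$; $t(P_i)$ the top of $P_i$. The voting by quota $f^q$ is defined by: $k\in f^q(P)$ iff $|\{i\in N:k\in t(P_i)\}|\ge q_k$. Option set $O(P_i)=\{f(P_i,P_{-i}):P_{-i}\in\mathcal{P}^{n-1}\}$. $P_i'$ is a manipulation at $P_i$ if $f(P_i',P_{-i})P_if(P_i,P_{-i})$ for some $P_{-i}$; it is obvious if the $P_i$-worst element of $O(P_i')$ is strictly $P_i$-better than that of $O(P_i)$, or the $P_i$-best element of $O(P_i')$ is strictly $P_i$-better than that of $O(P_i)$. NOM means no obvious manipulation exists. *)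

(* Defs.v *)
From mathcomp Require Import all_boot.
Set Implicit Arguments. Unset Strict Implicit. Unset Printing Implicit Defensive.

Record pref (T : finType) := Pref {
  prel :> rel T;
  _ : irreflexive prel;
  _ : transitive prel;
  _ : forall x y, x != y -> prel x y || prel y x }.

Section Voting.
Variable K : finType.
Variable n : nat.

(* Alternatives are subsets of K; agents are N = 'I_n. *)
Definition profile := 'I_n -> pref {set K}.

(* t(P_i): the P_i-best alternative (it exists and is unique since P_i is a
   strict linear order on a finite nonempty set; set0 is a dummy default). *)
Definition top (P : pref {set K}) : {set K} :=
  odflt set0 [pick x | [forall y, (y != x) ==> P x y]].

Definition quota_rule (q : K -> nat) (P : profile) : {set K} :=
  [set k | q k <= #|[set i : 'I_n | k \in top (P i)]|].

Definition upd (Q : profile) (i : 'I_n) (Pi : pref {set K}) : profile :=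
  fun j => if j == i then Pi else Q j.

Definition option_set (f : profile -> {set K}) (i : 'I_n) (Pi : pref {set K})
  : {set K} -> Prop :=
  fun x => exists Q : profile, f (upd Q i Pi) = x.

Definition is_worst (R : pref {set K}) (O : {set K} -> Prop) (w : {set K}) :=
  O w /\ forall y, O y -> y != w -> R y w.
Definition is_best (R : pref {set K}) (O : {set K} -> Prop) (b : {set K}) :=
  O b /\ forall y, O y -> y != b -> R b y.

Definition manipulation (f : profile -> {set K}) (i : 'I_n)
  (Pi Pi' : pref {set K}) : Prop :=
  exists Q : profile, Pi (f (upd Q i Pi')) (f (upd Q i Pi)).

Definition obvious_manipulation (f : profile -> {set K}) (i : 'I_n)
  (Pi Pi' : pref {set K}) : Prop :=
  manipulation f i Pi Pi' /\
  ((exists w' w, is_worst Pi (option_set f i Pi') w' /\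
                 is_worst Pi (option_set f i Pi) w /\ Pi w' w) \/
   (exists b' b, is_best Pi (option_set f i Pi') b' /\
                 is_best Pi (option_set f i Pi) b /\ Pi b' b)).

Definition NOM (f : profile -> {set K}) : Prop :=
  forall i Pi Pi', ~ obvious_manipulation f i Pi Pi'.

End Voting.

(* Main.v *)
Require Import Defs.
From mathcomp Require Import all_boot.
From mathcomp Require Import zify.
From Stdlib Require Import ClassicalEpsilon.
Set Implicit Arguments. Unset Strict Implicit. Unset Printing Implicit Defensive.

Definition rk (T : finType) (t w x : T) : nat :=
  if x == t then 0 else if x == w then #|T|.+1 else (enum_rank x).+1.

Lemma rk_inj (T : finType) (t w : T) : injective (rk t w).
Proof.
move=> x y; rewrite /rk.
have hx : enum_rank x < #|T| := ltn_ord _.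
have hy : enum_rank y < #|T| := ltn_ord _.
case: (eqVneq x t) => [xt|xt]; case: (eqVneq y t) => [yt|yt];
case: (eqVneq x w) => [xw|xw]; case: (eqVneq y w) => [yw|yw] => E;
  try congruence; try (exfalso; lia).
all: by move/eqP: E; rewrite eqSS => /eqP /val_inj /enum_rank_inj.
Qed.

Definition mkpref (T : finType) (t w : T) : pref T.
Proof.
refine (@Pref T (fun x y => rk t w x < rk t w y) _ _ _).
- by move=> x; rewrite /= ltnn.
- by move=> y x z; apply: ltn_trans.
- by move=> x y nxy; rewrite -neq_ltn (inj_eq (@rk_inj _ t w)).
Defined.

Lemma pref_irr (T : finType) (R : pref T) x : R x x = false.
Proof. by case: R => r ir ? ? /=; apply: ir. Qed.
Lemma pref_trans (T : finType) (R : pref T) x y z : R x y -> R y z -> R x z.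
Proof. by case: R => r ? tr ? /=; apply: tr. Qed.
Lemma pref_tot (T : finType) (R : pref T) x y : x != y -> R x y || R y x.
Proof. by case: R => r ? ? to /=; apply: to. Qed.

Lemma top_mkpref (K : finType) (t w : {set K}) : top (mkpref t w) = t.
Proof.
rewrite /top; case: pickP => [x /forallP Hx | H] /=.
- apply/eqP; apply: contraT => xt.
  have := implyP (Hx t); rewrite eq_sym xt => /(_ isT).
  by rewrite /= /rk eqxx ltn0.
- have := H t; move/negbT/forallPn => [y]; rewrite negb_imply => /andP [yt].
  by rewrite /= /rk eqxx (negbTE yt); case: (y == w).
Qed.

Lemma mkpref_bot (K : finType) (t w y : {set K}) :
  w != t -> y != w -> mkpref t w y w.
Proof.
move=> wt yw; rewrite /= /rk (negbTE wt) eqxx.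
case: (y == t) => //; rewrite (negbTE yw) ltnS; exact: ltn_ord.
Qed.

Definition Qw (K : finType) (n : nat) (S : {set K}) : profile K n :=
  fun _ => mkpref S S.
Arguments Qw {K} n S.

Lemma mem_top_upd (K : finType) (n : nat) (S : {set K}) i P j k :
  (k \in top (upd (Qw n S) i P j)) = if j == i then k \in top P else k \in S.
Proof. by rewrite /upd; case: (j == i); rewrite ?top_mkpref. Qed.

Lemma f_upd (K : finType) (n : nat) (q : K -> nat) (S : {set K}) (i : 'I_n) P :
  quota_rule q (upd (Qw n S) i P) =
  [set j | q j <= (j \in S) * n.-1 + (j \in top P)].
Proof.
apply/setP => k; rewrite !inE; congr (_ <= _).
have n0 := ltn_ord i.
case hS: (k \in S); case hT: (k \in top P).
- have -> : [set j : 'I_n | k \in top (upd (Qw n S) i P j)] = [set: 'I_n].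
    by apply/setP => j; rewrite !inE mem_top_upd hS hT; case: (j == i).
  rewrite cardsT card_ord /=; lia.
- have -> : [set j : 'I_n | k \in top (upd (Qw n S) i P j)] = [set~ i].
    by apply/setP => j; rewrite !inE mem_top_upd hS hT; case: (j == i).
  rewrite cardsC1 card_ord /=; lia.
- have -> : [set j : 'I_n | k \in top (upd (Qw n S) i P j)] = [set i].
    by apply/setP => j; rewrite !inE mem_top_upd hS hT; case: (j == i).
  rewrite cards1 /=; lia.
- have -> : [set j : 'I_n | k \in top (upd (Qw n S) i P j)] = set0.
    by apply/setP => j; rewrite !inE mem_top_upd hS hT; case: (j == i).
  rewrite cards0 /=; lia.
Qed.

Lemma forced_in (K : finType) (n : nat) (q : K -> nat) (i : 'I_n) P k Q :
  k \in top P -> q k <= 1 -> k \in quota_rule q (upd Q i P).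
Proof.
move=> hk hq; rewrite inE; apply: leq_trans hq _; rewrite card_gt0.
by apply/set0Pn; exists i; rewrite inE /upd eqxx.
Qed.

Lemma forced_out (K : finType) (n : nat) (q : K -> nat) (i : 'I_n) P k Q :
  k \notin top P -> n <= q k -> k \notin quota_rule q (upd Q i P).
Proof.
move=> hk hq; rewrite inE -ltnNge; apply: leq_trans hq.
have n0 := ltn_ord i.
have sub : [set j : 'I_n | k \in top (upd Q i P j)] \subset [set~ i].
  apply/subsetP => j; rewrite !inE /upd; case: (eqVneq j i) => [_|//].
  by rewrite (negbTE hk).
have := subset_leq_card sub; rewrite cardsC1 card_ord; lia.
Qed.

Definition asb (P : Prop) : bool :=
  if excluded_middle_informative P then true else false.
Lemma asbE (P : Prop) : asb P <-> P.
Proof. by rewrite /asb; case: excluded_middle_informative. Qed.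

Lemma worst_ex (K : finType) (R : pref {set K}) (O : {set K} -> Prop) x0 :
  O x0 -> exists w, is_worst R O w.
Proof.
move=> Ox0.
have Sx0 : (fun x => asb (O x)) x0 by apply/asbE.
case: (@arg_minnP _ x0 (fun x => asb (O x)) (fun x => #|[set y | R x y]|) Sx0) => w Sw Hmin.
exists w; split; first by apply/asbE.
move=> y Oy yw.
have := Hmin y (proj2 (asbE _) Oy).
case/orP: (pref_tot R yw) => // Rwy.
have : [set z | R y z] \proper [set z | R w z].
  apply/properP; split.
    by apply/subsetP => z; rewrite !inE => Ryz; exact: pref_trans Rwy Ryz.
  by exists y; rewrite !inE ?Rwy ?pref_irr.
move/proper_card; rewrite ltnNge => /negbTE ->. by [].
Qed.

Lemma not_NOM (K : finType) (n : nat) (q : K -> nat) (i : 'I_n)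
  (t t' w : {set K}) : w != t ->
  (forall P, top P = t -> quota_rule q (upd (Qw n w) i P) = w) ->
  (forall Q, quota_rule q (upd Q i (mkpref t' t')) != w) ->
  ~ NOM (@quota_rule K n q).
Proof.
move=> wt Hw Hno NOMf.
apply: (NOMf i (mkpref t w) (mkpref t' t')); split.
- exists (Qw n w); rewrite (Hw (mkpref t w)); last exact: top_mkpref.
  apply: mkpref_bot; [exact: wt | exact: Hno].
- left.
  have O0 : option_set (@quota_rule K n q) i (mkpref t' t')
     (quota_rule q (upd (Qw n w) i (mkpref t' t'))) by exists (Qw n w).
  have [w' Hw'] := worst_ex (mkpref t w) O0.
  exists w', w; split; first exact: Hw'. split.
  + split; first by exists (Qw n w); apply: Hw; exact: top_mkpref.
    move=> y _ yw; exact: mkpref_bot.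
  + apply: mkpref_bot; first exact: wt.
    case: Hw' => [[Q <-] _]; exact: Hno.
Qed.

Lemma all_opt (K : finType) (n : nat) (q : K -> nat) :
  (forall k, 2 <= q k <= n.-1) ->
  forall i P S, option_set (@quota_rule K n q) i P S.
Proof.
move=> H i P S; exists (Qw n S); rewrite f_upd; apply/setP => j; rewrite inE.
have := H j; case: (j \in S); case: (j \in top P) => /=; lia.
Qed.

Theorem corollary3 (K : finType) (n : nat) (q : K -> nat) :
  2 <= n -> 2 <= #|K| ->
  (forall k, 1 <= q k <= n) ->
  (NOM (@quota_rule K n q) <-> forall k, 2 <= q k <= n.-1).
Proof.
move=> n2 K2 hq; split.
- move=> NOMf k; apply/negPn/negP => hk.
  have [k2 k2k] : exists k2, k2 != k.
    have : 0 < #|[set~ k]| by rewrite cardsC1; lia.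
    case/card_gt0P => x xk; exists x; move: xk; rewrite !inE; exact: id.
  pose i : 'I_n := Ordinal (leq_trans (isT : 0 < 2) n2).
  have hk1 := hq k; have hk2 := hq k2.
  have qk : q k = 1 \/ q k = n by lia.
  have kk2 : (k == k2) = false by rewrite eq_sym (negbTE k2k).
  case: qk => qk.
  + case: (ltnP (q k2) n) => hk2n.
    * move: NOMf; apply: (@not_NOM K n q i set0 setT [set k2]).
      - by apply/set0Pn; exists k2; rewrite set11.
      - move=> P HP; rewrite f_upd HP; apply/setP => j; rewrite !inE.
        have := hq j; case: eqVneq => [->|jk2] /=; lia.
      - move=> Q; apply/eqP => E.
        have := @forced_in K n q i (mkpref setT setT) k Q.
        rewrite top_mkpref in_setT qk E inE kk2 => /(_ isT isT); done.
    * move: NOMf; apply: (@not_NOM K n q i [set k2] setT set0).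
      - by rewrite eq_sym; apply/set0Pn; exists k2; rewrite set11.
      - move=> P HP; rewrite f_upd HP; apply/setP => j; rewrite !inE.
        have := hq j; case: eqVneq => [->|jk2] /=; lia.
      - move=> Q; apply/eqP => E.
        have := @forced_in K n q i (mkpref setT setT) k Q.
        rewrite top_mkpref in_setT qk E inE => /(_ isT isT); done.
  + case: (ltnP (q k2) n) => hk2n.
    * move: NOMf; apply: (@not_NOM K n q i [set k] set0 [set k; k2]).
      - apply/negP => /eqP E; have : k2 \in [set k; k2] by rewrite !inE eqxx orbT.
        by rewrite E inE eq_sym kk2.
      - move=> P HP; rewrite f_upd HP; apply/setP => j; rewrite !inE.
        have := hq j; case: (eqVneq j k) => [->|jk]; rewrite ?kk2 /=; try lia.
        case: eqVneq => [->|jk2] /=; lia.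
      - move=> Q; apply/eqP => E.
        have := @forced_out K n q i (mkpref set0 set0) k Q.
        rewrite top_mkpref in_set0 qk E !inE eqxx => /(_ isT (leqnn _)); done.
    * move: NOMf; apply: (@not_NOM K n q i [set k; k2] set0 [set k]).
      - apply/negP => /eqP E; have : k2 \in [set k; k2] by rewrite !inE eqxx orbT.
        by rewrite -E inE eq_sym kk2.
      - move=> P HP; rewrite f_upd HP; apply/setP => j; rewrite !inE.
        have := hq j; case: (eqVneq j k) => [->|jk]; rewrite ?kk2 /=; try lia.
        case: eqVneq => [->|jk2] /=; lia.
      - move=> Q; apply/eqP => E.
        have := @forced_out K n q i (mkpref set0 set0) k Q.
        rewrite top_mkpref in_set0 qk E !inE eqxx => /(_ isT (leqnn _)); done.
- move=> H i Pi Pi' [_ [[w' [w [[_ Hw'] [[Ow _] Pw'w]]]] | [b' [b [[Ob' _] [[_ Hb] Pb'b]]]]]].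
  + have ww' : w != w' by apply/eqP => E; rewrite E pref_irr in Pw'w.
    have := Hw' w (all_opt H i Pi' w) ww' => Pww'.
    by have := pref_trans Pw'w Pww'; rewrite pref_irr.
  + have bb' : b' != b by apply/eqP => E; rewrite E pref_irr in Pb'b.
    have := Hb b' (all_opt H i Pi b') bb' => Pbb'.
    by have := pref_trans Pb'b Pbb'; rewrite pref_irr.
Qed.
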